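(* Let $G$ be a minimal prime graph complement, and suppose $G$ has a vertex of degree $2$. Then $G$ contains an induced $5$-cycle $S$, and there are three vertices of $S$, exactly two of which are adjacent to each other, such that $G$ is obtained from $S$ by duplicating each of these three vertices some finite (possibly zero) number of times, where duplicating a vertex $v$ means adding a new vertex $w$ adjacent to exactly the neighbors of $v$ (and not to $v$). Equivalently, $G$ is isomorphic to the graph with vertex set $\{A,B\}\cup P\cup Q\cup R$ (disjoint union) with $|P|,|Q|,|R|\ge 1$, in which $A$ is adjacent to every vertex of $P\cup R$, $B$ is adjacent to every vertex of $Q\cup R$, every vertex of $P$ is adjacent to every vertex of $Q$, and there are no other edges. In particular, $G$ is the complement of a reseminant graph.
   Context: All graphs are finite and simple. A graph $G$ is a minimal prime graph complement if $G$ has at least $2$ vertices and: (1) the complement $\overline{G}$ is connected; (2) $G$ is triangle-free; (3) $G$ is $3$-colorable (has a proper vertex coloring with $3$ colors); (4) $G$ is edge-maximal with respect to (2) and (3), i.e. for any two distinct nonadjacent vertices $u,v$ of $G$, the graph obtained by adding the edge $uv$ to $G$ either contains a triangle or is not $3$-colorable. (Its complement is called a minimal prime graph.) A minimal prime graph is reseminant if it is obtained from the $5$-cycle $C_5$ by repeated vertex duplication; in terms of complements, $G$ is the complement of a reseminant graph iff $G$ is obtained from $C_5$ by repeatedly choosing a vertex $v$ and adding a new vertex $w$ adjacent to exactly the neighbors of $v$. *)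

(* Defs.v *)
From mathcomp Require Import all_boot.
Set Implicit Arguments. Unset Strict Implicit. Unset Printing Implicit Defensive.

Definition simple_graph (T : finType) (e : rel T) : Prop :=
  (forall x y, e x y = e y x) /\ (forall x, ~~ e x x).

Definition compl_rel (T : finType) (e : rel T) : rel T :=
  fun x y => (x != y) && ~~ e x y.

Definition graph_connected (T : finType) (e : rel T) : Prop :=
  forall x y : T, connect e x y.

Definition triangle_free (T : finType) (e : rel T) : Prop :=
  forall x y z : T, ~ [/\ e x y, e y z & e x z].

Definition colorable (T : finType) (k : nat) (e : rel T) : Prop :=
  exists f : T -> 'I_k, forall x y, e x y -> f x != f y.

Definition add_edge (T : finType) (e : rel T) (u v : T) : rel T :=
  fun x y => [|| e x y, (x == u) && (y == v) | (x == v) && (y == u)].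

Definition min_prime_compl (T : finType) (e : rel T) : Prop :=
  [/\ 1 < #|T|,
      graph_connected (compl_rel e),
      triangle_free e,
      colorable 3 e &
      forall u v : T, u != v -> ~~ e u v ->
        ~ (triangle_free (add_edge e u v) /\ colorable 3 (add_edge e u v))].

Definition degree (T : finType) (e : rel T) (v : T) : nat := #|[set w | e v w]|.

(* Main.v *)
Require Import Defs.
From mathcomp Require Import all_boot.
Set Implicit Arguments. Unset Strict Implicit. Unset Printing Implicit Defensive.

Lemma add_edge_bad (T : finType) (e : rel T) (u w : T) (f : T -> 'I_3) :
  simple_graph e -> min_prime_compl e ->
  u != w -> ~~ e u w -> (forall z, e u z -> e w z -> False) ->
  (forall x y, e x y -> f x != f y) -> f u != f w -> False.
Proof.
move=> [sym irr] [_ _ tf _ mx] uw nuw nc fp fuw.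
apply: (mx u w uw nuw); split.
- have ae : forall x y, add_edge e u w x y ->
     e x y \/ (x = u /\ y = w) \/ (x = w /\ y = u).
    move=> x y /or3P [h|/andP [/eqP -> /eqP ->]|/andP [/eqP -> /eqP ->]]; tauto.
  move=> x y z [/ae h1 /ae h2 /ae h3].
  have nw : w != u by rewrite eq_sym.
  have irr' : forall x, e x x -> False by move=> t ht; move: (irr t); rewrite ht.
  case: h1 => [h1|[[? ?]|[? ?]]]; case: h2 => [h2|[[? ?]|[? ?]]];
    case: h3 => [h3|[[? ?]|[? ?]]]; subst;
    try (by apply: (tf x y z));
    try (by move: uw; rewrite eqxx);
    try (by move: nw; rewrite eqxx);
    try (by move: nuw; rewrite ?h1 ?h2 ?h3);
    try (by move: nuw; rewrite sym ?h1 ?h2 ?h3);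
    try (by apply: irr'; eassumption);
    try (by apply: (nc z); rewrite // sym);
    try (by apply: (nc x); rewrite // sym);
    try (by apply: (nc y); rewrite // sym).
- exists f => x y /or3P [h|/andP [/eqP -> /eqP ->]|/andP [/eqP -> /eqP ->]].
  + exact: fp.
  + exact: fuw.
  + by rewrite eq_sym.
Qed.

Definition dcol (T : finType) (e : rel T) (a b : T) (x : T) : 'I_3 :=
  if e a x then @Ordinal 3 1 isT else if e b x then @Ordinal 3 2 isT
  else @Ordinal 3 0 isT.

Lemma dcol_proper (T : finType) (e : rel T) (a b : T) :
  simple_graph e -> triangle_free e ->
  (forall x y, ~~ e a x -> ~~ e b x -> ~~ e a y -> ~~ e b y -> ~~ e x y) ->
  forall x y, e x y -> dcol e a b x != dcol e a b y.
Proof.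
move=> [sym irr] tf ind x y h; rewrite /dcol.
case ax: (e a x); case ay: (e a y); case bx: (e b x); case by_: (e b y) => //;
  try (by case: (tf a x y); split);
  try (by case: (tf b x y); split);
  by move: (ind x y); rewrite ax ay bx by_ h; move/(_ isT isT isT isT).
Qed.

Lemma W_empty (T : finType) (e : rel T) (v a b : T) :
  simple_graph e -> min_prime_compl e ->
  (forall w, e v w = (w == a) || (w == b)) -> a != b ->
  forall x, [|| x == a, x == b, e a x | e b x].
Proof.
move=> G M nb ab; have [sym irr] := G.
have [_ _ tf [c0 c0p] _] := M.
have eva : e v a by rewrite nb eqxx.
have evb : e v b by rewrite nb eqxx orbT.
have key : forall w, w != a -> w != b -> ~~ e a w -> ~~ e b w -> v != w /\ ~~ e v w.
  move=> w wa wb naw nbw; split; last by rewrite nb (negPf wa) (negPf wb).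
  apply/eqP=> vw; move: naw; by rewrite -vw sym eva.
have cl1 : forall w, w != a -> w != b -> ~~ e a w -> ~~ e b w -> c0 w = c0 v.
  move=> w wa wb naw nbw; apply/eqP; rewrite eq_sym; apply/negPn/negP => hne.
  have [vw nvw] := key w wa wb naw nbw.
  apply: (add_edge_bad G M vw nvw _ c0p hne).
  move=> z; rewrite nb => /orP [/eqP ->|/eqP ->]; rewrite sym.
  - by rewrite (negPf naw).
  - by rewrite (negPf nbw).
have ind : forall x y, ~~ e a x -> ~~ e b x -> ~~ e a y -> ~~ e b y -> ~~ e x y.
  move=> x y nax nbx nay nby; apply/negP => hxy.
  have xa : x != a by apply/eqP=> xa; move: nay; rewrite -xa hxy.
  have xb : x != b by apply/eqP=> xb; move: nby; rewrite -xb hxy.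
  have ya : y != a by apply/eqP=> ya; move: nax; rewrite -ya sym hxy.
  have yb : y != b by apply/eqP=> yb; move: nbx; rewrite -yb sym hxy.
  move: (c0p x y hxy); by rewrite (cl1 x) // (cl1 y) // eqxx.
move=> x; apply/negPn/negP; rewrite !negb_or => /and4P [xa xb nax nbx].
have [vx nvx] := key x xa xb nax nbx.
apply: (add_edge_bad G M vx nvx _ (dcol_proper G tf ind)).
- move=> z; rewrite nb => /orP [/eqP ->|/eqP ->]; rewrite sym.
  + by rewrite (negPf nax).
  + by rewrite (negPf nbx).
- by rewrite /dcol sym eva (negPf nax) (negPf nbx).
Qed.

Lemma ind_W (T : finType) (e : rel T) (a b : T) :
  simple_graph e -> ~~ e a b ->
  (forall x, [|| x == a, x == b, e a x | e b x]) ->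
  forall x y, ~~ e a x -> ~~ e b x -> ~~ e a y -> ~~ e b y -> ~~ e x y.
Proof.
move=> [sym irr] nab W x y nax nbx nay nby.
move: (W x) (W y); rewrite (negPf nax) (negPf nbx) (negPf nay) (negPf nby) !orbF.
by case/orP=> /eqP -> /orP [/eqP ->|/eqP ->]; rewrite ?irr // sym.
Qed.

Lemma PQ_complete (T : finType) (e : rel T) (a b : T) :
  simple_graph e -> min_prime_compl e -> ~~ e a b ->
  (forall x, [|| x == a, x == b, e a x | e b x]) ->
  forall p q, e a p -> ~~ e b p -> e b q -> ~~ e a q -> e p q.
Proof.
move=> G M nab W p q ap nbp bq naq; have [sym irr] := G.
have [_ _ tf _ _] := M.
apply/negPn/negP => npq.
have pq : p != q by apply/eqP=> pq; move: naq; rewrite -pq ap.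
apply: (add_edge_bad G M pq npq _ (dcol_proper G tf (ind_W G nab W))).
- move=> z pz qz; case/or4P: (W z) => [/eqP zz|/eqP zz|az|bz].
  + by move: naq; rewrite -zz sym qz.
  + by move: nbp; rewrite -zz sym pz.
  + by apply: (tf a p z); split.
  + by apply: (tf b q z); split; rewrite // sym.
- by rewrite /dcol ap (negPf naq) bq.
Qed.

Lemma P_nonempty (T : finType) (e : rel T) (v a b : T) :
  simple_graph e -> min_prime_compl e -> ~~ e a b -> e v a -> e v b ->
  (forall x, [|| x == a, x == b, e a x | e b x]) ->
  exists p, e a p && ~~ e b p.
Proof.
move=> G M nab va vb W; have [sym irr] := G.
have [_ conn tf _ _] := M.
case: (boolP [exists p, e a p && ~~ e b p]) => [/existsP //|].
rewrite negb_exists => /forallP H; exfalso.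
have H' : forall p, e a p -> e b p.
  by move=> p ap; move: (H p); rewrite ap /= negbK.
case: (boolP [exists q, e b q && ~~ e a q]) => [/existsP [q /andP [bq naq]]|].
  have aq : a != q by apply/eqP=> aq; move: nab; rewrite aq sym bq.
  apply: (add_edge_bad G M aq naq _ (dcol_proper G tf (ind_W G nab W))).
  - by move=> z az qz; apply: (tf b q z); split => //; exact: H'.
  - by rewrite /dcol (negPf (irr a)) [e b a]sym (negPf nab) (negPf naq) bq.
rewrite negb_exists => /forallP K.
have K' : forall q, e b q -> e a q.
  by move=> q bq; move: (K q); rewrite bq /= negbK.
have cl : closed (compl_rel e) (fun x => (x == a) || (x == b)).
  have one : forall x y, compl_rel e x y -> (x == a) || (x == b) -> (y == a) || (y == b).
    move=> x y /andP [xy nxy] hx; case/or4P: (W y) => [/eqP->|/eqP->|ay|by_]; rewrite ?eqxx ?orbT //.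
    - by case/orP: hx nxy => /eqP ->; rewrite ?ay ?(H' _ ay).
    - by case/orP: hx nxy => /eqP ->; rewrite ?by_ ?(K' _ by_).
  move=> x y hxy; apply/idP/idP; first exact: one.
  apply: one; by rewrite /compl_rel eq_sym sym.
have := closed_connect cl (conn a v).
rewrite /in_mem /= eqxx /= => /esym /orP [/eqP vv|/eqP vv].
- by move: va; rewrite vv (negPf (irr a)).
- by move: vb; rewrite vv (negPf (irr b)).
Qed.

Theorem theorem2 (T : finType) (e : rel T) :
  simple_graph e ->
  min_prime_compl e ->
  (exists v : T, degree e v = 2) ->
  exists (A B : T) (P Q R : {set T}),
    [/\ [/\ A != B, A \notin P :|: Q :|: R & B \notin P :|: Q :|: R],
        [/\ [disjoint P & Q], [disjoint Q & R] & [disjoint P & R]],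
        [/\ P != set0, Q != set0 & R != set0],
        (forall x : T, x \in [set A; B] :|: P :|: Q :|: R) &
        (forall x y : T, e x y =
           [|| (x == A) && (y \in P :|: R), (y == A) && (x \in P :|: R),
               (x == B) && (y \in Q :|: R), (y == B) && (x \in Q :|: R),
               (x \in P) && (y \in Q) | (x \in Q) && (y \in P)])].
Proof.
move=> G M [v dv]; have [sym irr] := G; have [_ _ tf _ _] := M.
have /cards2P [a [b [ab eqs]]] : #|[set w | e v w]| == 2 by rewrite -[#|_|]/(degree e v) dv.
have nb : forall w, e v w = (w == a) || (w == b).
  by move=> w; have := congr1 (fun S : {set T} => w \in S) eqs; rewrite /= !inE.
have va : e v a by rewrite nb eqxx.
have vb : e v b by rewrite nb eqxx orbT.
have nab : ~~ e a b by apply/negP => hab; apply: (tf v a b); split.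
have nba : ~~ e b a by rewrite sym.
have W := W_empty G M nb ab.
have W' : forall x, [|| x == b, x == a, e b x | e a x].
  by move=> x; move: (W x); case: (x == a); case: (x == b); case: (e a x); case: (e b x).
have [p /andP [ap nbp]] := P_nonempty G M nab va vb W.
have [q /andP [bq naq]] := P_nonempty G M nba vb va W'.
have PQ := PQ_complete G M nab W.
have iaa := negPf (irr a); have ibb := negPf (irr b).
exists a, b, [set x | e a x && ~~ e b x], [set x | e b x && ~~ e a x],
  [set x | e a x && e b x]; split.
- by rewrite !inE iaa ibb (negPf nab) (negPf nba) ab.
- by split; rewrite -setI_eq0; apply/eqP/setP=> x; rewrite !inE;
    case: (e a x); case: (e b x).
- split; apply/set0Pn.
  + by exists p; rewrite inE ap nbp.
  + by exists q; rewrite inE bq naq.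
  + by exists v; rewrite inE -!(sym v) va vb.
- by move=> x; rewrite !inE; move: (W x);
    case: (x == a); case: (x == b); case: (e a x); case: (e b x).
move=> x y; rewrite !inE; apply/idP/idP.
- move=> h.
  case: (eqVneq x a) => [exa|xa].
    by subst x; rewrite ?eqxx h; case: (e b y).
  case: (eqVneq x b) => [exb|xb].
    by subst x; rewrite ?eqxx h; case: (e a y); rewrite /= ?orbT.
  case: (eqVneq y a) => [eya|ya].
    by subst y; move: h; rewrite sym => h; rewrite ?eqxx h; case: (e b x); rewrite /= ?orbT.
  case: (eqVneq y b) => [eyb|yb].
    by subst y; move: h; rewrite sym => h; rewrite ?eqxx h; case: (e a x); rewrite /= ?orbT.
  have Wx := W x; have Wy := W y.
  rewrite (negPf xa) (negPf xb) in Wx *; rewrite (negPf ya) (negPf yb) in Wy *.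
  rewrite /=.
  case ax: (e a x) Wx; case bx: (e b x); case ay: (e a y) Wy; case by_: (e b y) => //= _ _;
    try (by case: (tf a x y); split);
    try (by case: (tf b x y); split).
- case/orP=> [/andP [/eqP -> h]|].
    by case/orP: h => /andP [].
  case/orP=> [/andP [/eqP -> h]|].
    by rewrite sym; case/orP: h => /andP [].
  case/orP=> [/andP [/eqP -> h]|].
    by case/orP: h => /andP [].
  case/orP=> [/andP [/eqP -> h]|].
    by rewrite sym; case/orP: h => /andP [].
  case/orP=> [/andP [/andP [ax nbx] /andP [by_ nay]]|].
    exact: PQ.
  move=> /andP [/andP [bx nax] /andP [ay nby]].
  by rewrite sym; apply: PQ.
Qed.
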